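(* Let $s$ be a Lucasian GNS on a ring $D$. Then for all $a\in\mathbf N$ and $b\ge1$, \[ \tilde s_b(a)\equiv a\bmod s(b), \] where $\tilde s_b(a)=s(ab)/s(b)$.
   Context: A generalized $n$-series (GNS) over a ring $D$ is a function $s\colon\mathbf N\to D$ with $s(0)=0$, $s(n)$ a non-zero-divisor for $n>0$, and $s(n-k)\mid s(n)-s(k)$ for $n>k>0$. It is Lucasian if $s(a+b)\equiv s(a)+s(b)\bmod s(a)s(b)$ for all $a,b$. The rescaled GNS is $s_b(n)=s(bn)$ and the reduction of a GNS $t$ is $\tilde t(n)=t(n)/t(1)$; so $\tilde s_b(a)=s(ab)/s(b)$. *)

(* Defs.v *)
From mathcomp Require Import all_boot all_algebra.
Set Implicit Arguments. Unset Strict Implicit. Unset Printing Implicit Defensive.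
Import GRing.Theory.
Local Open Scope ring_scope.

Definition rdvd (D : comNzRingType) (x y : D) : Prop := exists c : D, y = c * x.

(* x is a non-zero-divisor (D commutative, so one-sided suffices). *)
Definition nzd (D : comNzRingType) (x : D) : Prop := forall y : D, x * y = 0 -> y = 0.

Definition is_GNS (D : comNzRingType) (s : nat -> D) : Prop :=
  [/\ s 0%N = 0,
      (forall n : nat, (0 < n)%N -> nzd (s n)) &
      (forall n k : nat, (0 < k)%N -> (k < n)%N -> rdvd (s (n - k)%N) (s n - s k))].

Definition lucasian (D : comNzRingType) (s : nat -> D) : Prop :=
  forall a b : nat, rdvd (s a * s b) (s (a + b)%N - (s a + s b)).

(* Main.v *)
Require Import Defs.
From mathcomp Require Import all_boot all_algebra.
From mathcomp Require Import ring.
Local Open Scope ring_scope.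
Import GRing.Theory.

Lemma aux (D : comNzRingType) (s : nat -> D) :
  is_GNS s -> lucasian s -> forall a b : nat,
  exists q : D, s (a * b)%N = q * s b /\ rdvd (s b) (q - a%:R).
Proof.
move=> [s0 _ _] hL a b; elim: a => [|a [q [hq [c hc]]]].
  by exists 0; rewrite mul0n s0 mul0r; split => //; exists 0; rewrite subrr mul0r.
have [d hd] := hL (a * b)%N b.
exists (q + 1 + d * q * s b); split.
  rewrite mulSnr.
  have -> : s (a * b + b)%N = (s (a * b + b)%N - (s (a * b)%N + s b)) + (s (a * b)%N + s b) by ring.
  rewrite hd hq; ring.
exists (c + d * q).
have -> : q = c * s b + a%:R by rewrite -hc; ring.
rewrite -addn1 natrD; ring.
Qed.

Theorem lemma5p11 (D : comNzRingType) (s : nat -> D) :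
  is_GNS s -> lucasian s ->
  forall a b : nat, (1 <= b)%N ->
    (exists q : D, s (a * b)%N = q * s b) /\
    (forall q : D, s (a * b)%N = q * s b -> rdvd (s b) (q - a%:R)).
Proof.
move=> hG hL a b hb.
have [q0 [h0 [c hc]]] := @aux D s hG hL a b.
split; first by exists q0.
move=> q hq.
have [_ hnz _] := hG.
have e : q = q0.
  apply/eqP; rewrite -subr_eq0; apply/eqP; apply: (hnz b hb).
  by rewrite mulrBr ![s b * _]mulrC -hq -h0 subrr.
by exists c; rewrite e.
Qed.
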